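(* Let $K=3$. There exist a constant $c>0$ and, for infinitely many $T$, a sequence of outcomes $\mathbf x\in[3]^T$ and forecasts $\mathbf p\in\Delta_3^T$ such that $\mathrm{Cal}(\mathbf p^{(i)},\mathbf x^{(i)})=0$ for each $i\in\{1,2,3\}$, but $\mathrm{MaxAgentReg}(\mathbf p,\mathbf x)\ge cT$.
   Context: $\Delta_K$ is the probability simplex in $\mathbb R^K$, outcome $i$ identified with $e_i$. For $\mathbf p\in\Delta_K^T$, $\mathbf x\in[K]^T$ and $i\in[K]$, define the binary sequences $\mathbf p^{(i)}\in[0,1]^T$ by $p^{(i)}_t=(p_t)_i$ and $\mathbf x^{(i)}\in\{0,1\}^T$ by $x^{(i)}_t=\mathbf 1(x_t=i)$. Binary calibration error: for $\mathbf q\in[0,1]^T$, $\mathbf y\in\{0,1\}^T$, $\mathrm{Cal}(\mathbf q,\mathbf y)=\sum_q|q\,n_q-m_q|$ with $n_q=|\{t:q_t=q\}|$, $m_q=|\{t:q_t=q,y_t=1\}|$. A multiclass scoring rule $\ell:\Delta_K\times[K]\to\mathbb R$ with $\ell(p;q)=\sum_iq_i\ell(p,i)$ is proper if $\ell(p;p)\le\ell(p';p)$ for all $p,p'$; $\mathcal L$ is the set of proper ones with values in $[-1,1]$. With $\beta=\frac1T\sum_te_{x_t}$, $\mathrm{Reg}_\ell(\mathbf p,\mathbf x)=\sum_t\ell(p_t,x_t)-\sum_t\ell(\beta,x_t)$ and $\mathrm{MaxAgentReg}(\mathbf p,\mathbf x)=\sup_{\ell\in\mathcal L}\mathrm{Reg}_\ell(\mathbf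 p,\mathbf x)$. *)

(* Defs.v *)
From HB Require Import structures.
From mathcomp Require Import all_boot all_order all_algebra.
From mathcomp Require Import classical_sets reals.
Set Implicit Arguments. Unset Strict Implicit. Unset Printing Implicit Defensive.
Import Order.TTheory GRing.Theory Num.Theory.
Local Open Scope ring_scope.
Local Open Scope classical_set_scope.

Section Defs.
Variable R : realType.

Definition in_simplex (K : nat) (p : 'I_K -> R) : Prop :=
  (forall i, 0 <= p i) /\ \sum_(i < K) p i = 1.

Definition Cal (T : nat) (q : 'I_T -> R) (y : 'I_T -> bool) : R :=
  \sum_(v <- undup [seq q t | t <- enum 'I_T])
     `| v * (#|[set t | q t == v]|)%:R - (#|[set t | (q t == v) && y t]|)%:R |.

Definition exp_score (K : nat) (l : ('I_K -> R) -> 'I_K -> R) (p q : 'I_K -> R) : R :=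
  \sum_(i < K) q i * l p i.

Definition bounded_proper (K : nat) (l : ('I_K -> R) -> 'I_K -> R) : Prop :=
  (forall p, in_simplex p -> forall i, -1 <= l p i <= 1) /\
  (forall p p', in_simplex p -> in_simplex p' -> exp_score l p p <= exp_score l p' p).

Definition beta (K T : nat) (x : 'I_T -> 'I_K) : 'I_K -> R :=
  fun i => (#|[set t | x t == i]|)%:R / T%:R.

Definition Reg (K T : nat) (l : ('I_K -> R) -> 'I_K -> R)
  (p : 'I_T -> 'I_K -> R) (x : 'I_T -> 'I_K) : R :=
  \sum_(t < T) l (p t) (x t) - \sum_(t < T) l (beta x) (x t).

Definition MaxAgentReg (K T : nat) (p : 'I_T -> 'I_K -> R) (x : 'I_T -> 'I_K) : R :=
  sup [set r | exists l, bounded_proper l /\ r = Reg l p x].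

End Defs.

(* Main.v *)
Require Import Defs.
From HB Require Import structures.
From mathcomp Require Import all_boot all_order all_algebra.
From mathcomp Require Import classical_sets reals.
From mathcomp.algebra_tactics Require Import ring lra.
From mathcomp Require Import zify.
Import Order.TTheory GRing.Theory Num.Theory.
Local Open Scope ring_scope.
Set Implicit Arguments. Unset Strict Implicit.

Section S.
Variable R : realType.

Definition o0 : 'I_3 := @Ordinal 3 0 isT.
Definition o1 : 'I_3 := @Ordinal 3 1 isT.
Definition o2 : 'I_3 := @Ordinal 3 2 isT.

Lemma sum3 (f : 'I_3 -> R) : \sum_(i < 3) f i = f o0 + f o1 + f o2.
Proof. rewrite !big_ord_recl big_ord0 addr0 addrA.
by congr (f _ + f _ + f _); apply: val_inj.
Qed.

Lemma ord3P (i : 'I_3) : i = o0 \/ i = o1 \/ i = o2.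
Proof.
case: i => [[|[|[|m]]] Hm].
- by left; apply: val_inj.
- by right; left; apply: val_inj.
- by right; right; apply: val_inj.
- by [].
Qed.

Definition v3 (a0 a1 a2 : R) : 'I_3 -> R := fun i => nth 0 [:: a0; a1; a2] i.

Definition E (q u : 'I_3 -> R) := \sum_(i < 3) q i * u i.

Lemma Ev3 q a0 a1 a2 : E q (v3 a0 a1 a2) = q o0 * a0 + q o1 * a1 + q o2 * a2.
Proof. by rewrite /E sum3. Qed.

Definition best2 (p u v : 'I_3 -> R) := if E p u <= E p v then u else v.

Definition S0 := v3 0 0 0.
Definition A0 := v3 (1/2) (-1) 1.
Definition A1 := v3 1 (1/2) (-1).
Definition A2 := v3 (-1) 1 (1/2).

Definition lrule (p : 'I_3 -> R) : 'I_3 -> R :=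
  best2 p (best2 p (best2 p S0 A0) A1) A2.

Lemma best2_le p u v : E p (best2 p u v) <= E p u /\ E p (best2 p u v) <= E p v.
Proof. rewrite /best2; case: ifP => h; split => //; rewrite ?lexx //.
by move/negbT: h; rewrite -ltNge => /ltW.
Qed.

Lemma best2_mem p u v : best2 p u v = u \/ best2 p u v = v.
Proof. rewrite /best2; case: ifP; auto. Qed.

Lemma best2_L p u v : E p u <= E p v -> best2 p u v = u.
Proof. by rewrite /best2 => ->. Qed.
Lemma best2_R p u v : E p v < E p u -> best2 p u v = v.
Proof. by rewrite /best2 leNgt => ->. Qed.

Lemma lrule_min p m : m = S0 \/ m = A0 \/ m = A1 \/ m = A2 -> E p (lrule p) <= E p m.
Proof.
rewrite /lrule.
have [a1 a2] := best2_le p S0 A0.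
have [b1 b2] := best2_le p (best2 p S0 A0) A1.
have [c1 c2] := best2_le p (best2 p (best2 p S0 A0) A1) A2.
move=> [->|[->|[->|->]]] //.
- by apply: (le_trans c1); apply: (le_trans b1).
- by apply: (le_trans c1); apply: (le_trans b1).
- by apply: (le_trans c1).
Qed.

Lemma lrule_mem p : lrule p = S0 \/ lrule p = A0 \/ lrule p = A1 \/ lrule p = A2.
Proof.
rewrite /lrule.
case: (best2_mem p (best2 p (best2 p S0 A0) A1) A2) => ->; last by auto.
case: (best2_mem p (best2 p S0 A0) A1) => ->; last by auto.
case: (best2_mem p S0 A0) => ->; auto.
Qed.

Lemma lrule_bounded p i : -1 <= lrule p i <= 1.
Proof.
have [i0|[i0|i0]] := ord3P i; subst i;
have [->|[->|[->|->]]] := lrule_mem p; rewrite /S0 /A0 /A1 /A2 /v3 /=; apply/andP; split; lra.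
Qed.

Lemma lrule_proper : bounded_proper lrule.
Proof.
split; first by move=> p _ i; exact: lrule_bounded.
move=> p p' _ _; rewrite /exp_score.
have := @lrule_min p _ (lrule_mem p'). by rewrite /E.
Qed.

Definition F0 := v3 (1/2) (1/2) 0.
Definition F1 := v3 0 (1/2) (1/2).
Definition F2 := v3 (1/2) 0 (1/2).
Definition Fm (j : 'I_3) := nth F2 [:: F0; F1; F2] j.
Definition xs n (t : 'I_(n+n+n)) : 'I_3 := if (t < n)%N then o0 else if (t < n+n)%N then o1 else o2.
Arguments xs {n}.
Definition ps n (t : 'I_(n+n+n)) := Fm (xs t).
Arguments ps {n}.

Lemma sum_x n (h : 'I_3 -> R) : \sum_(t < n+n+n) h (xs t) = n%:R * (h o0 + h o1 + h o2).
Proof.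
rewrite !big_split_ord /=.
transitivity (\sum_(i<n) h o0 + \sum_(i<n) h o1 + \sum_(i<n) h o2); last first.
  by rewrite !sumr_const card_ord -!mulrnDl mulr_natl.
congr (_ + _ + _); apply: eq_bigr => i _; rewrite /xs /=.
- by rewrite ltn_ord.
- by rewrite ltnNge leq_addr /= ltn_add2l ltn_ord.
- have -> : (n + n + i < n)%N = false by rewrite ltnNge -addnA leq_addr.
  by rewrite ltnNge leq_addr.
Qed.

Lemma card_R T (P : 'I_T -> bool) : (#|[set t | P t]%classic|)%:R = \sum_t (P t)%:R :> R.
Proof.
rewrite -sumr_const big_mkcond /=; apply: eq_bigr => t _.
have -> : (t \in [set t | P t]%classic) = P t by rewrite /in_mem /= /in_set boolp.asboolb.
by case: (P t).
Qed.
Definition third := v3 (1/3) (1/3) (1/3).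

Ltac evs := rewrite /S0 /A0 /A1 /A2 ?Ev3 /F0 /F1 /F2 /third /v3 /=; lra.

Lemma l_F0 : lrule F0 = A0.
Proof. rewrite /lrule (@best2_R _ S0 A0); last evs. rewrite (@best2_L _ A0 A1); last evs.
by rewrite best2_L; last evs. Qed.
Lemma l_F1 : lrule F1 = A1.
Proof. rewrite /lrule (@best2_L _ S0 A0); last evs. rewrite (@best2_R _ S0 A1); last evs.
by rewrite best2_L; last evs. Qed.
Lemma l_F2 : lrule F2 = A2.
Proof. rewrite /lrule (@best2_L _ S0 A0); last evs. rewrite (@best2_L _ S0 A1); last evs.
by rewrite best2_R; last evs. Qed.
Lemma l_third : lrule third = S0.
Proof. rewrite /lrule (@best2_L _ S0 A0); last evs. rewrite (@best2_L _ S0 A1); last evs.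
by rewrite best2_L; last evs. Qed.
End S.
Arguments S0 {R}. Arguments A0 {R}. Arguments A1 {R}. Arguments A2 {R}. Arguments F0 {R}. Arguments F1 {R}. Arguments F2 {R}. Arguments Fm {R}. Arguments ps {R n}. Arguments third {R}. Arguments lrule {R}.

Section S.
Variable R : realType.
Lemma Fm_simplex j : in_simplex (@Fm R j).
Proof.
split.
- move=> i; have [->|[->|->]] := ord3P j; have [->|[->|->]] := ord3P i;
  rewrite /Fm /F0 /F1 /F2 /v3 /=; lra.
- rewrite sum3; have [->|[->|->]] := ord3P j; rewrite /Fm /F0 /F1 /F2 /v3 /=; lra.
Qed.

Lemma third_simplex : in_simplex (@third R).
Proof.
split; last by rewrite sum3 /third /v3 /=; lra.
move=> i; have [->|[->|->]] := ord3P i; rewrite /third /v3 /=; lra.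
Qed.


Lemma beta_xs n : (0 < n)%N -> @beta R _ _ (xs (n:=n)) = @third R.
Proof.
move=> n0; apply: boolp.funext => i.
rewrite /beta. rewrite (@card_R R _ (fun t => xs t == i)) (sum_x n (fun j => (j == i)%:R)).
have nz : (n%:R : R) != 0 by rewrite pnatr_eq0 -lt0n.
rewrite !natrD.
have [->|[->|->]] := ord3P i; rewrite /third /v3 /=.
all: have np : 0 < (n%:R : R) by rewrite ltr0n.
all: have e3 : (n%:R + n%:R + n%:R : R) = n%:R * 3 by ring.
all: by rewrite e3 ?addr0 ?add0r mulr1 invfM mulrA divff.
Qed.
Lemma Reg_val n : (0 < n)%N -> Reg lrule (@ps R n) (@xs n) = n%:R * (3/2).
Proof.
move=> n0; rewrite /Reg beta_xs // l_third.
rewrite (sum_x n (fun j => lrule (Fm j) j)) (sum_x n (fun j => S0 j)).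
change (Fm o0) with (@F0 R); change (Fm o1) with (@F1 R); change (Fm o2) with (@F2 R).
rewrite l_F0 l_F1 l_F2 /A0 /A1 /A2 /S0 /v3 /=; lra.
Qed.

Lemma half_neq0 : ((1/2 : R) == 0) = false.
Proof. apply/negbTE; rewrite mul1r invr_eq0 pnatr_eq0 //. Qed.
Lemma zero_neq_half : ((0 : R) == 1/2) = false.
Proof. by rewrite eq_sym half_neq0. Qed.

Lemma cal_xs n (i : 'I_3) : Cal (fun t => @ps R n t i) (fun t => xs t == i) = 0.
Proof.
rewrite /Cal big1_seq // => v /andP[_]; rewrite mem_undup => /mapP[t _ ->].
rewrite (@card_R R _ (fun t' => ps t' i == ps t i)).
rewrite (@card_R R _ (fun t' => (ps t' i == ps t i) && (xs t' == i))).
rewrite (sum_x n (fun j => (Fm j i == ps t i)%:R)).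
rewrite (sum_x n (fun j => ((Fm j i == ps t i) && (j == i))%:R)).
rewrite /ps; move: (xs t) => j.
have [->|[->|->]] := ord3P i; have [->|[->|->]] := ord3P j;
  rewrite /Fm /F0 /F1 /F2 /v3 /= ?eqxx ?half_neq0 ?zero_neq_half /=.
all: apply/eqP; rewrite normr_eq0; apply/eqP; lra.
Qed.


Lemma main_bound n : (0 < n)%N -> (1/2) * (n + n + n)%:R <= MaxAgentReg (@ps R n) (@xs n).
Proof.
move=> n0.
apply: (@le_trans _ _ (Reg lrule (@ps R n) (@xs n))).
  by rewrite Reg_val // !natrD; lra.
apply: ub_le_sup; last by exists lrule; split => //; exact: lrule_proper.
exists ((\sum_(t < n + n + n) (1 : R)) - \sum_(t < n + n + n) (-1 : R)).
move=> r [l [[hb _] ->]].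
rewrite /Reg.
have h1 : \sum_(t < n + n + n) l (ps t) (xs t) <= \sum_(t < n + n + n) (1 : R).
  apply: ler_sum => t _; have /andP[_ ->] := hb _ (Fm_simplex (xs t)) (xs t). done.
have h2 : \sum_(t < n + n + n) (-1 : R) <= \sum_(t < n + n + n) l (@beta R _ _ (@xs n)) (xs t).
  apply: ler_sum => t _; rewrite beta_xs //.
  by have /andP[-> _] := hb _ third_simplex (xs t).
lra.
Qed.
End S.

Unset Implicit Arguments.

Theorem theorem5p5 (R : realType) :
  exists c : R, 0 < c /\
    forall N : nat, exists T : nat, (N <= T)%N /\
      exists (x : 'I_T -> 'I_3) (p : 'I_T -> 'I_3 -> R),
        (forall t, in_simplex (p t)) /\
        (forall i : 'I_3, Cal (fun t => p t i) (fun t => x t == i) = 0) /\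
        c * T%:R <= MaxAgentReg p x.
Proof.
exists (1/2); split; first lra.
move=> N; exists (N.+1 + N.+1 + N.+1)%N; split; first lia.
exists (@xs N.+1), (@ps R N.+1); split; first by move=> t; exact: Fm_simplex.
split; first by move=> i; exact: cal_xs.
exact: main_bound.
Qed.
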